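(* Let $k>0$. On $\mathbb{C}\times\mathcal{D}_1$ consider the system $$2k\ddot z-\bar\eta\dot z^2+2\Big(2k\frac{\bar w}{P}-\bar\eta^2\Big)\dot z\dot w-\bar\eta^3\dot w^2=0,\qquad 2k\ddot w+\dot z^2+2\bar\eta\dot z\dot w+\Big(4k\frac{\bar w}{P}+\bar\eta^2\Big)\dot w^2=0,$$ where $P=1-|w|^2$ and $\eta=\frac{z+\bar zw}{1-|w|^2}$. For any $\eta_0\in\mathbb{C}$ and $B\in\mathbb{C}\setminus\{0\}$, the curve $w(t)=B\,\frac{\tanh(t|B|)}{|B|}$, $z(t)=\eta_0-w(t)\bar\eta_0$ is a solution of this system (along it $\eta(t)\equiv\eta_0$ is constant).
   Context: $\mathcal{D}_1=\{w\in\mathbb{C}:|w|<1\}$. The displayed system is the geodesic equation of the Kähler metric on the Siegel–Jacobi disk with Kähler form $\omega_1=\mathrm{i}\big[\frac{2k}{(1-|w|^2)^2}dw\wedge d\bar w+\frac{A\wedge\bar A}{1-|w|^2}\big]$, $A=dz+\bar\eta dw$. *)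

(* Defs.v *)
From Stdlib Require Import Reals.
Open Scope R_scope.

Record Cplx := mkC { Re : R ; Im : R }.

Definition Cadd (a b : Cplx) : Cplx := mkC (Re a + Re b) (Im a + Im b).
Definition Copp (a : Cplx) : Cplx := mkC (- Re a) (- Im a).
Definition Csub (a b : Cplx) : Cplx := Cadd a (Copp b).
Definition Cmul (a b : Cplx) : Cplx :=
  mkC (Re a * Re b - Im a * Im b) (Re a * Im b + Im a * Re b).
Definition Cconj (a : Cplx) : Cplx := mkC (Re a) (- Im a).
Definition Cnorm2 (a : Cplx) : R := Re a * Re a + Im a * Im a.
Definition Cabs (a : Cplx) : R := sqrt (Cnorm2 a).
Definition Cinv (a : Cplx) : Cplx := mkC (Re a / Cnorm2 a) (- Im a / Cnorm2 a).
Definition Cdiv (a b : Cplx) : Cplx := Cmul a (Cinv b).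
Definition RtoC (r : R) : Cplx := mkC r 0.
Definition C0 : Cplx := RtoC 0.

Definition tanh (x : R) : R := sinh x / cosh x.

Definition has_deriv (f f' : R -> Cplx) : Prop :=
  forall t : R,
    derivable_pt_lim (fun s => Re (f s)) t (Re (f' t)) /\
    derivable_pt_lim (fun s => Im (f s)) t (Im (f' t)).

Definition Pfun (w : Cplx) : Cplx := RtoC (1 - Cnorm2 w).

Definition eta (z w : Cplx) : Cplx := Cdiv (Cadd z (Cmul (Cconj z) w)) (Pfun w).

Definition geod_eq1 (k : R) (z w z1 w1 z2 : Cplx) : Cplx :=
  let eb := Cconj (eta z w) in
  Cadd (Cadd (Csub (Cmul (RtoC (2 * k)) z2) (Cmul eb (Cmul z1 z1)))
             (Cmul (RtoC 2)
                   (Cmul (Csub (Cmul (RtoC (2 * k)) (Cdiv (Cconj w) (Pfun w)))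
                               (Cmul eb eb))
                         (Cmul z1 w1))))
       (Copp (Cmul (Cmul eb (Cmul eb eb)) (Cmul w1 w1))).

Definition geod_eq2 (k : R) (z w z1 w1 w2 : Cplx) : Cplx :=
  let eb := Cconj (eta z w) in
  Cadd (Cadd (Cadd (Cmul (RtoC (2 * k)) w2) (Cmul z1 z1))
             (Cmul (RtoC 2) (Cmul eb (Cmul z1 w1))))
       (Cmul (Cadd (Cmul (RtoC (4 * k)) (Cdiv (Cconj w) (Pfun w))) (Cmul eb eb))
             (Cmul w1 w1)).

Definition w_curve (B : Cplx) (t : R) : Cplx :=
  Cmul B (RtoC (tanh (t * Cabs B) / Cabs B)).
Definition z_curve (eta0 B : Cplx) (t : R) : Cplx :=
  Csub eta0 (Cmul (w_curve B t) (Cconj eta0)).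

(* Main.v *)
Require Import Defs.
From Stdlib Require Import Reals Lra Psatz FunctionalExtensionality.
Open Scope R_scope.

Lemma ch_pos x : 0 < cosh x.
Proof. unfold cosh. pose proof (exp_pos x); pose proof (exp_pos (-x)); lra. Qed.

Lemma ch_sh x : cosh x * cosh x - sinh x * sinh x = 1.
Proof.
  unfold cosh, sinh. assert (H: exp x * exp (-x) = 1).
  { rewrite <- exp_plus. replace (x + - x) with 0 by ring. apply exp_0. }
  nra.
Qed.

Lemma tanh_sq x : 0 <= tanh x * tanh x < 1.
Proof.
  unfold tanh. pose proof (ch_pos x). pose proof (ch_sh x).
  split. nra.
  replace (sinh x / cosh x * (sinh x / cosh x)) with (1 - 1/(cosh x * cosh x)).
  2:{ apply (Rmult_eq_reg_r (cosh x * cosh x)). rewrite Rmult_minus_distr_r. unfold Rdiv. replace (1 * / (cosh x * cosh x) * (cosh x * cosh x)) with 1 by (field; lra). replace (sinh x * / cosh x * (sinh x * / cosh x) * (cosh x * cosh x)) with (sinh x * sinh x) by (field; lra). lra. nra. }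
  assert (0 < 1/(cosh x * cosh x)) by (apply Rdiv_lt_0_compat; nra). lra.
Qed.

Lemma d_tanh x : derivable_pt_lim tanh x (1 - tanh x * tanh x).
Proof.
  pose proof (ch_pos x). pose proof (ch_sh x).
  unfold tanh.
  replace (1 - sinh x / cosh x * (sinh x / cosh x)) with
    ((cosh x * cosh x - sinh x * sinh x) / (cosh x)²) by (unfold Rsqr; field; lra).
  apply (derivable_pt_lim_div sinh cosh x (cosh x) (sinh x)).
  apply derivable_pt_lim_sinh. apply derivable_pt_lim_cosh. lra.
Qed.

Lemma d_ext (f g : R -> R) t d D : (forall s, g s = f s) -> D = d ->
  derivable_pt_lim f t d -> derivable_pt_lim g t D.
Proof. intros H1 H2. replace g with f. subst; auto. apply functional_extensionality; auto. Qed.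

Lemma d_c b t : b <> 0 ->
  derivable_pt_lim (fun s => tanh (s * b) / b) t (1 - b*b*((tanh (t*b)/b)*(tanh (t*b)/b))).
Proof.
  intro hb.
  apply (d_ext (mult_real_fct (/b) (comp tanh (fun s => s * b))) _ t
           (/b * ((1 - tanh (t*b) * tanh (t*b)) * b))).
  - intro s. unfold mult_real_fct, comp. field. auto.
  - field. auto.
  - apply derivable_pt_lim_scal.
    apply (derivable_pt_lim_comp (fun s => s * b) tanh t b).
    + apply (d_ext (mult_real_fct b id) _ t (b * 1)).
      intro; unfold mult_real_fct, id; ring. ring.
      apply derivable_pt_lim_scal. apply derivable_pt_lim_id.
    + apply d_tanh.
Qed.

Lemma mk_eq a b c d : a = c -> b = d -> mkC a b = mkC c d.
Proof. intros; subst; auto. Qed.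

Lemma alg (k c br bi er ei : R) :
  let B := mkC br bi in let e := mkC er ei in
  let N := br*br+bi*bi in let p := 1 - N*(c*c) in
  p <> 0 ->
  let w := Cmul B (RtoC c) in
  let w1 := Cmul B (RtoC p) in
  let w2 := Cmul B (RtoC (-2*N*c*p)) in
  let z := Csub e (Cmul w (Cconj e)) in
  let z1 := Copp (Cmul w1 (Cconj e)) in
  let z2 := Copp (Cmul w2 (Cconj e)) in
  eta z w = e /\ geod_eq1 k z w z1 w1 z2 = C0 /\ geod_eq2 k z w z1 w1 w2 = C0.
Proof.
  intros B e N p hp w w1 w2 z z1 z2.
  assert (Hn : Cnorm2 w = N*(c*c)) by (unfold w, Cnorm2, N; simpl; ring).
  assert (Hp : Pfun w = RtoC p) by (unfold Pfun; rewrite Hn; reflexivity).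
  assert (He : eta z w = e).
  { unfold eta. rewrite Hp. unfold z, w, e, B, Cdiv, Cinv, Cnorm2, Cadd, Cmul, Cconj, Csub, Copp, RtoC; simpl.
    unfold p, N in *. f_equal; field; nra. }
  split; [exact He|]. unfold geod_eq1, geod_eq2. rewrite He, Hp.
  unfold z, w, w1, w2, z1, z2, e, B, Cdiv, Cinv, Cnorm2, Cadd, Cmul, Cconj, Csub, Copp, RtoC, C0; simpl.
  unfold p, N in *. split; apply mk_eq; field; nra.
Qed.

Lemma hd_lin (g g' : R->Cplx) (f f' : R->R) (Kr Ki Cr Ci : R):
 (forall t, derivable_pt_lim f t (f' t)) ->
 (forall s, Re (g s) = Cr + Kr * f s /\ Im (g s) = Ci + Ki * f s) ->
 (forall s, Re (g' s) = Kr * f' s /\ Im (g' s) = Ki * f' s) -> has_deriv g g'.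
Proof.
  intros Hf Hg Hg' t. split.
  - apply (d_ext (plus_fct (fct_cte Cr) (mult_real_fct Kr f)) _ t (0 + Kr * f' t)).
    + intro s; unfold plus_fct, fct_cte, mult_real_fct; rewrite (proj1 (Hg s)); ring.
    + rewrite (proj1 (Hg' t)); ring.
    + apply derivable_pt_lim_plus. apply derivable_pt_lim_const. apply derivable_pt_lim_scal; auto.
  - apply (d_ext (plus_fct (fct_cte Ci) (mult_real_fct Ki f)) _ t (0 + Ki * f' t)).
    + intro s; unfold plus_fct, fct_cte, mult_real_fct; rewrite (proj2 (Hg s)); ring.
    + rewrite (proj2 (Hg' t)); ring.
    + apply derivable_pt_lim_plus. apply derivable_pt_lim_const. apply derivable_pt_lim_scal; auto.
Qed.

Theorem mainTheorem5 (k : R) (hk : 0 < k) (eta0 B : Cplx) (hB : B <> C0) :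
  (forall t : R, Cabs (w_curve B t) < 1) /\
  (exists z1 z2 w1 w2 : R -> Cplx,
     has_deriv (z_curve eta0 B) z1 /\ has_deriv z1 z2 /\
     has_deriv (w_curve B) w1 /\ has_deriv w1 w2 /\
     (forall t : R,
        geod_eq1 k (z_curve eta0 B t) (w_curve B t) (z1 t) (w1 t) (z2 t) = C0 /\
        geod_eq2 k (z_curve eta0 B t) (w_curve B t) (z1 t) (w1 t) (w2 t) = C0)) /\
  (forall t : R, eta (z_curve eta0 B t) (w_curve B t) = eta0).
Proof.
  destruct B as [br bi], eta0 as [er ei].
  set (N := br*br+bi*bi).
  assert (HN : 0 < N).
  { unfold N. destruct (Req_dec br 0); destruct (Req_dec bi 0).
    - subst. exfalso; apply hB; reflexivity.
    - nra. - nra. - nra. }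
  set (b := Cabs (mkC br bi)).
  assert (Hbb : b * b = N) by (unfold b, Cabs, Cnorm2; simpl; apply sqrt_sqrt; lra).
  assert (Hb : b <> 0) by (intro E; rewrite E in Hbb; lra).
  set (c := fun t => tanh (t*b)/b).
  set (p := fun t => 1 - N*(c t * c t)).
  assert (Hp : forall t, p t = 1 - tanh (t*b) * tanh (t*b)).
  { intro t; unfold p, c; rewrite <- Hbb; field; auto. }
  assert (Hp0 : forall t, p t <> 0).
  { intro t; rewrite Hp; pose proof (tanh_sq (t*b)); lra. }
  assert (Hw : forall t, w_curve (mkC br bi) t = Cmul (mkC br bi) (RtoC (c t))) by reflexivity.
  assert (Hz : forall t, z_curve (mkC er ei) (mkC br bi) t =
     Csub (mkC er ei) (Cmul (Cmul (mkC br bi) (RtoC (c t))) (Cconj (mkC er ei)))) by reflexivity.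
  set (w1 := fun t => Cmul (mkC br bi) (RtoC (p t))).
  set (w2 := fun t => Cmul (mkC br bi) (RtoC (-2*N*c t*p t))).
  set (z1 := fun t => Copp (Cmul (w1 t) (Cconj (mkC er ei)))).
  set (z2 := fun t => Copp (Cmul (w2 t) (Cconj (mkC er ei)))).
  assert (Dc : forall t, derivable_pt_lim c t (p t)).
  { intro t. change (p t) with (1 - N*(c t*c t)). rewrite <- Hbb. apply d_c; auto. }
  assert (Dp : forall t, derivable_pt_lim p t (-2*N*c t*p t)).
  { intro t. apply (d_ext (plus_fct (fct_cte 1) (mult_real_fct (-N) (mult_fct c c))) _ t
       (0 + -N * (p t * c t + c t * p t))).
    - intro s; unfold p, plus_fct, fct_cte, mult_real_fct, mult_fct; ring.
    - ring.
    - apply derivable_pt_lim_plus. apply derivable_pt_lim_const.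
      apply derivable_pt_lim_scal. apply derivable_pt_lim_mult; auto. }
  pose proof (fun t => alg k (c t) br bi er ei (Hp0 t)) as A.
  split; [|split].
  - intro t. rewrite Hw. unfold Cabs.
    replace (Cnorm2 (Cmul (mkC br bi) (RtoC (c t)))) with (tanh (t*b) * tanh (t*b)).
    + pose proof (tanh_sq (t*b)). rewrite <- sqrt_1. apply sqrt_lt_1; lra.
    + unfold Cnorm2, c; simpl. match goal with |- _ = ?r => replace r with (N * (tanh (t*b)/b) * (tanh (t*b)/b)) by (unfold N; ring) end. rewrite <- Hbb. field. auto.
  - exists z1, z2, w1, w2. split; [|split; [|split; [|split]]].
    + apply (hd_lin _ _ c p (-(br*er + bi*ei)) (-(bi*er - br*ei)) er ei Dc).
      * intro s. rewrite Hz. simpl. split; ring.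
      * intro s. unfold z1, w1. simpl. split; ring.
    + apply (hd_lin _ _ p (fun t => -2*N*c t*p t) (-(br*er + bi*ei)) (-(bi*er - br*ei)) 0 0 Dp).
      * intro s. unfold z1, w1. simpl. split; ring.
      * intro s. unfold z2, w2. simpl. split; ring.
    + apply (hd_lin _ _ c p br bi 0 0 Dc).
      * intro s. rewrite Hw. simpl. split; ring.
      * intro s. unfold w1. simpl. split; ring.
    + apply (hd_lin _ _ p (fun t => -2*N*c t*p t) br bi 0 0 Dp).
      * intro s. unfold w1. simpl. split; ring.
      * intro s. unfold w2. simpl. split; ring.
    + intro t. rewrite Hw, Hz. destruct (A t) as [_ [E1 E2]]. split; [exact E1|exact E2].
  - intro t. rewrite Hw, Hz. exact (proj1 (A t)).
Qed.
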